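(* Let $I$ be a 1-absorbing primary hyperideal of $R$ that is not a primary hyperideal of $R$. Then $R$ is a local multiplicative hyperring.
   Context: Throughout, $R$ is a commutative multiplicative hyperring ($(R,+)$ abelian group, $\circ$ a commutative associative hyperoperation into nonempty subsets, $a\circ(b+c)\subseteq a\circ b+a\circ c$, $a\circ(-b)=(-a)\circ b=-(a\circ b)$; $A\circ B=\bigcup a\circ b$), with identity $1$ ($a\in a\circ 1$); $x$ is a unit if $1\in x\circ y$ for some $y$. All hyperideals are $\mathbf{C}$-hyperideals (for any finite product $A=r_1\circ\cdots\circ r_n$, $A\cap I\neq\emptyset\Rightarrow A\subseteq I$). $\sqrt I=\{r:r^n\subseteq I\text{ for some }n\}$. Primary hyperideal: nonzero proper $Q$ with $x\circ y\subseteq Q\Rightarrow x\in Q$ or $y\in\sqrt Q$. 1-absorbing primary hyperideal: proper $I$ such that for all nonunit $x,y,z$, $x\circ y\circ z\subseteq I$ implies $x\circ y\subseteq I$ or $z\in\sqrt I$. $R$ is local if it has a unique maximal hyperideal. *)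

(* Defs.v *)
From mathcomp Require Import all_boot all_algebra.
Set Implicit Arguments. Unset Strict Implicit. Unset Printing Implicit Defensive.
Import GRing.Theory.
Local Open Scope ring_scope.

Section Hyper.
Variable R : zmodType.

Definition hsub (A B : R -> Prop) : Prop := forall z, A z -> B z.
Definition hseteq (A B : R -> Prop) : Prop := forall z, A z <-> B z.
Definition hsing (x : R) : R -> Prop := fun z => z = x.
Definition hsadd (A B : R -> Prop) : R -> Prop :=
  fun z => exists a b, A a /\ B b /\ z = a + b.
Definition hsopp (A : R -> Prop) : R -> Prop := fun z => A (- z).

Variable hm : R -> R -> (R -> Prop).
Variable one : R.

Definition hsmul (A B : R -> Prop) : R -> Prop :=
  fun z => exists a b, A a /\ B b /\ hm a b z.

Definition hprod (r : R) (rs : seq R) : R -> Prop :=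
  foldl (fun A x => hsmul A (hsing x)) (hsing r) rs.

(* r^(n+1) *)
Definition hpow (r : R) (n : nat) : R -> Prop := hprod r (nseq n r).

Record mhyperring : Prop := {
  hm_nonempty : forall a b, exists z, hm a b z;
  hm_comm : forall a b, hseteq (hm a b) (hm b a);
  hm_assoc : forall a b c,
     hseteq (hsmul (hm a b) (hsing c)) (hsmul (hsing a) (hm b c));
  hm_distr : forall a b c, hsub (hm a (b + c)) (hsadd (hm a b) (hm a c));
  hm_oppr : forall a b, hseteq (hm a (- b)) (hsopp (hm a b));
  hm_oppl : forall a b, hseteq (hm (- a) b) (hsopp (hm a b));
  hm_one : forall a, hm a one a
}.

Definition hunit (x : R) : Prop := exists y, hm x y one.

(* hyperideals; by the standing convention every hyperideal is a C-hyperideal *)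
Definition hyperideal (I : R -> Prop) : Prop :=
  [/\ I 0,
      (forall a b, I a -> I b -> I (a - b)),
      (forall r a, I a -> hsub (hm r a) I) &
      (forall r rs, (exists z, hprod r rs z /\ I z) -> hsub (hprod r rs) I)].

Definition hproper (I : R -> Prop) : Prop := exists x, ~ I x.

Definition hrad (I : R -> Prop) : R -> Prop :=
  fun r => exists n, hsub (hpow r n) I.

Definition primary_cond (Q : R -> Prop) : Prop :=
  forall x y, hsub (hm x y) Q -> Q x \/ hrad Q y.
Definition primary_hyperideal (Q : R -> Prop) : Prop :=
  [/\ hyperideal Q, (exists x, Q x /\ x <> 0), hproper Q & primary_cond Q].

Definition one_absorbing_primary (I : R -> Prop) : Prop :=
  [/\ hyperideal I, hproper I &
      forall x y z, ~ hunit x -> ~ hunit y -> ~ hunit z ->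
        hsub (hprod x [:: y; z]) I -> hsub (hm x y) I \/ hrad I z].

Definition maximal_hyperideal (M : R -> Prop) : Prop :=
  [/\ hyperideal M, hproper M &
      forall J, hyperideal J -> hproper J -> hsub M J -> hsub J M].

Definition hlocal : Prop :=
  exists M, maximal_hyperideal M /\
    forall N, maximal_hyperideal N -> hseteq N M.

End Hyper.

(* Main.v *)
Require Import Defs.
From mathcomp Require Import all_boot all_algebra.
From Stdlib Require Import Classical.
Import GRing.Theory.
Local Open Scope ring_scope.

Theorem mainTheorem6 (R : zmodType) (hm : R -> R -> (R -> Prop)) (one : R)
  (HR : mhyperring hm one) (I : R -> Prop) :
  one_absorbing_primary hm one I ->
  ~ primary_cond hm I ->
  hlocal hm.
Proof.
case: HR => Hne Hcomm Hassoc Hdistr Hoppr Hoppl Hone.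
case=> HI HIp Habs Hnp.
have unitJ : forall J, hyperideal hm J -> hproper J -> forall u, hunit hm one u -> ~ J u.
  move=> J [J0 Jsub Jmul JC] [x Jx] u [y Hy] Ju; apply: Jx.
  have J1 : J one by apply: (Jmul y u Ju); apply/Hcomm.
  by apply: (Jmul x one J1); apply: Hone.
have unitI : forall u b, hunit hm one u -> hsub (hm u b) I -> I b.
  move=> u b [y Hy] Hub.
  case: HI => I0 Isub Imul IC.
  have : hsmul hm (hsing b) (hm u y) b by exists b, one.
  move/(Hassoc b u y) => [w [v [Hw [-> Hwy]]]].
  have Iw : I w by apply: Hub; apply/Hcomm.
  by apply: (Imul y w Iw); apply/Hcomm.
have [a [b0 [Hab [Ha Hb]]]] : exists a b0, hsub (hm a b0) I /\ ~ I a /\ ~ hrad hm I b0.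
  apply: NNPP => Hn; apply: Hnp => x y Hxy.
  case: (classic (I x)) => [|Hx]; first by left.
  case: (classic (hrad hm I y)) => [|Hy]; first by right.
  by exfalso; apply: Hn; exists x, y.
have HbI : ~ I b0 by move=> Ib; apply: Hb; exists 0%N => z ->.
have anu : ~ hunit hm one a by move=> Hu; apply: HbI; exact: unitI Hu Hab.
have bnu : ~ hunit hm one b0.
  by move=> Hu; apply: Ha; apply: (unitI _ _ Hu) => z /Hcomm; apply: Hab.
have key : forall c, ~ hunit hm one c -> hsub (hm c a) I.
  move=> c Hc.
  have Hp : hsub (hprod hm c [:: a; b0]) I.
    move=> z [w [v [[a1 [b1 [-> [-> Hw]]]] [-> Hz]]]].
    have : hsmul hm (hm c a) (hsing b0) z by exists w, b0.
    move/(Hassoc c a b0) => [a2 [b2 [-> [Hb2 Hz2]]]].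
    case: HI => _ _ Imul _.
    exact: (Imul c b2 (Hab _ Hb2)).
  by case: (Habs c a b0 Hc anu bnu Hp).
pose M := fun x => ~ hunit hm one x.
have MI : hyperideal hm M.
  split.
  - by move=> Hu; apply: (unitJ I HI HIp _ Hu); case: HI.
  - move=> c d Hc Hd Hu; apply: Ha; apply: (unitI _ _ Hu).
    move=> z /Hcomm /Hdistr [p [q [Hp [Hq ->]]]].
    move/Hoppr: Hq => Hq.
    case: HI => _ Isub _ _.
    have -> : p + q = p - (- q) by rewrite opprK.
    apply: Isub; first by apply: (key c Hc); apply/Hcomm.
    by apply: (key d Hd); apply/Hcomm.
  - move=> r x Hx z Hz [y Hy]; apply: Hx.
    have : hsmul hm (hm x r) (hsing y) one by exists z, y; split; [apply/Hcomm|].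
    move/(Hassoc x r y) => [a1 [b1 [-> [_ H1]]]].
    by exists b1.
  - move=> r rs [z [Hz Mz]] w Hw Hu; apply: Ha; apply: (unitI _ _ Hu).
    case: HI => _ _ _ IC.
    have [t Ht] := Hne z a.
    have HC := IC r (rcons rs a).
    rewrite /hprod foldl_rcons -/(hprod hm r rs) in HC.
    move=> s Hs; apply: HC; last by exists w, a.
    by exists t; split; [exists z, a | apply: (key z Mz)].
have Mp : hproper M by exists one; move=> H; apply: H; exists one; apply: Hone.
have Mmax : maximal_hyperideal hm M.
  split => // J HJ HJp _ x Jx Hu; exact: (unitJ J HJ HJp x Hu Jx).
exists M; split => // N [HN HNp Nmax] z; split.
  by move=> Nz Hu; exact: (unitJ N HN HNp z Hu Nz).
apply: (Nmax M MI Mp) => x Nx Hu; exact: (unitJ N HN HNp x Hu Nx).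
Qed.
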